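(* Let $G$ be a simple directed graph and $\sigma$ a set of its nodes such that $G|_\sigma$ is a clique missing exactly one edge $j\not\to i$. Then for legal $\varepsilon,\delta$, $I-W_\sigma$ has Perron–Frobenius eigenvalue $$\lambda_{\max}=\varepsilon+\tfrac12(1-\varepsilon)\Big(|\sigma|+\sqrt{|\sigma|^2+4(\delta+\varepsilon)/(1-\varepsilon)}\Big).$$
   Context: A clique is a set of nodes pairwise bidirectionally connected; ''missing exactly one edge'' means all ordered pairs of distinct nodes of $\sigma$ are edges except one. Legal parameters: $\delta>0$, $0<\varepsilon<\frac{\delta}{\delta+1}$. $W=W(G,\varepsilon,\delta)$ has $W_{ii}=0$, $W_{ij}=-1+\varepsilon$ if $j\to i$, $W_{ij}=-1-\delta$ if $i\neq j$, $j\not\to i$; $W_\sigma$ is the principal submatrix on $\sigma$. $I-W_\sigma$ has positive entries and $\lambda_{\max}$ is its Perron–Frobenius eigenvalue. *)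

(* Defs.v *)
From HB Require Import structures.
From mathcomp Require Import all_boot all_order all_algebra.
From mathcomp Require Import complex.
Set Implicit Arguments. Unset Strict Implicit. Unset Printing Implicit Defensive.
Import Order.TTheory GRing.Theory Num.Theory.
Local Open Scope ring_scope.

(* A simple directed graph on a finite vertex type T: an edge relation
   [E : rel T] ([E j i] means j -> i) with no loops.  A relation allows at
   most one edge per ordered pair, so there are no multi-edges. *)
Definition simple_digraph (T : finType) (E : rel T) : Prop :=
  forall v : T, ~~ E v v.

Definition clique_missing_one_edge (T : finType) (E : rel T) (sigma : {set T})
  (i j : T) : Prop :=
  [/\ i \in sigma, j \in sigma, i != j &
      forall x y : T, x \in sigma -> y \in sigma -> x != y ->
        (E x y <-> ~ (x = j /\ y = i))].

Definition legal (R : realFieldType) (eps delta : R) : Prop :=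
  0 < delta /\ 0 < eps /\ eps < delta / (delta + 1).

Definition Wentry (R : pzRingType) (T : finType) (E : rel T) (eps delta : R)
  (i j : T) : R :=
  if i == j then 0 else if E j i then -1 + eps else -1 - delta.

Definition W_sub (R : pzRingType) (T : finType) (E : rel T) (eps delta : R)
  (sigma : {set T}) : 'M[R]_#|sigma| :=
  \matrix_(a, b) Wentry E eps delta (enum_val a) (enum_val b).

(* Perron–Frobenius eigenvalue (= spectral radius, attained by a real
   eigenvalue): l is a real eigenvalue of A and every complex eigenvalue z
   of A satisfies |z| <= l. *)
Definition PF_eigenvalue (R : rcfType) (n : nat) (A : 'M[R]_n) (l : R) : Prop :=
  root (char_poly A) l /\
  forall z : R[i], root (map_poly (real_complex R) (char_poly A)) z ->
    `|z| <= (real_complex R l).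

(* Main.v *)
Require Import Defs.
From HB Require Import structures.
From mathcomp Require Import all_boot all_order all_algebra.
From mathcomp Require Import complex.
From mathcomp Require Import ring lra.
Import Order.TTheory GRing.Theory Num.Theory.
Local Open Scope ring_scope.

Lemma normC_real (R : rcfType) (x : R) : `|real_complex R x| = real_complex R `|x|.
Proof. by rewrite normc_def /= expr0n /= addr0 sqrtr_sqr. Qed.

Lemma rowA (F : comPzRingType) n (A : 'M[F]_n) e t c (ii jj : 'I_n)
  (HA : forall a b, A a b = e * (a == b)%:R + t + c * ((a == ii) && (b == jj))%:R)
  (v : 'rV[F]_n) b :
  (v *m A) 0 b = e * v 0 b + t * (\sum_a v 0 a) + c * v 0 ii * (b == jj)%:R.
Proof.
rewrite mxE. under eq_bigr => a _ do rewrite HA !mulrDr.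
rewrite !big_split /= -mulr_suml.
have -> : \sum_(a < n) v 0 a * (e * (a == b)%:R) = e * v 0 b.
  rewrite (bigD1 b) //= big1 => [|a /negbTE ->]; last by rewrite mulr0 mulr0.
  by rewrite eqxx addr0 mulr1 mulrC.
have -> : \sum_(a < n) v 0 a * (c * ((a == ii) && (b == jj))%:R) = c * v 0 ii * (b == jj)%:R.
  rewrite (bigD1 ii) //= big1 => [|a /negbTE ->]; last by rewrite mulr0 mulr0.
  by rewrite eqxx addr0 /=; ring.
by rewrite [_ * t]mulrC.
Qed.

Lemma key_quad (R : realFieldType) (th N c D : R) : th != 0 ->
  D ^+ 2 = N ^+ 2 + 4 * c / th ->
  (th / 2 * (N + D)) ^+ 2 = th * N * (th / 2 * (N + D)) + th * c /\
  (th / 2 * (N + D)) + (th / 2 * (N - D)) = th * N /\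
  (th / 2 * (N + D)) * (th / 2 * (N - D)) = - (th * c).
Proof.
move=> th0 D2.
have e1 : (th / 2 * (N + D)) ^+ 2 - th * N * (th / 2 * (N + D)) - th * c
   = th ^+ 2 / 4 * (D ^+ 2 - N ^+ 2) - th * c by field.
have e2 : (th / 2 * (N + D)) * (th / 2 * (N - D)) + th * c
   = - (th ^+ 2 / 4 * (D ^+ 2 - N ^+ 2) - th * c) by field.
have e3 : th ^+ 2 / 4 * (D ^+ 2 - N ^+ 2) - th * c = 0 by rewrite D2; field.
split; last split.
- by apply/eqP; rewrite -subr_eq0 opprD addrA e1 e3.
- by field.
- by apply/eqP; rewrite -subr_eq0 opprK e2 e3 oppr0.
Qed.

Lemma entries (R : rcfType) (T : finType) (E : rel T) (sigma : {set T})
  (i j : T) (eps delta : R) (Hi : i \in sigma) (Hj : j \in sigma) :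
  i != j ->
  (forall x y : T, x \in sigma -> y \in sigma -> x != y ->
        (E x y <-> ~ (x = j /\ y = i))) ->
  forall a b, (1%:M - W_sub E eps delta sigma) a b =
    eps * (a == b)%:R + (1 - eps) + (delta + eps) *
      ((a == enum_rank_in Hi i) && (b == enum_rank_in Hj j))%:R.
Proof.
move=> Hij Hcl a b.
have vii : enum_val (enum_rank_in Hi i) = i := enum_rankK_in Hi Hi.
have vjj : enum_val (enum_rank_in Hj j) = j := enum_rankK_in Hj Hj.
rewrite !mxE /Wentry.
case: (eqVneq a b) => [<-|nab].
  rewrite !eqxx /=.
  have -> : ((a == enum_rank_in Hi i) && (a == enum_rank_in Hj j)) = false.
    apply/negbTE/negP => /andP[/eqP ai /eqP aj]; move: Hij.
    by rewrite -vii -vjj -ai -aj eqxx.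
  by rewrite /= mulr1n mulr1 mulr0 addr0 subr0 addrC subrK.
have nv : enum_val b != enum_val a by rewrite (inj_eq enum_val_inj) eq_sym.
rewrite (inj_eq enum_val_inj) (negbTE nab) /= mulr0 !add0r.
have Hab := Hcl _ _ (enum_valP b) (enum_valP a) nv.
case hn: ((a == enum_rank_in Hi i) && (b == enum_rank_in Hj j)).
  move/andP: hn => [/eqP ea /eqP eb].
  have -> : E (enum_val b) (enum_val a) = false.
    by apply/negbTE/negP => /Hab; apply; rewrite ea eb vii vjj.
  by rewrite mulr1 opprB; ring.
have -> : E (enum_val b) (enum_val a) = true.
  apply/Hab => -[ej ei]; move: hn.
  by rewrite -vii -vjj in ei ej; rewrite (enum_val_inj ei) (enum_val_inj ej) !eqxx.
by rewrite mulr0 addr0 opprD opprK addrC.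
Qed.

Theorem corollary3 (R : rcfType) (T : finType) (E : rel T) (sigma : {set T})
  (i j : T) (eps delta : R) :
  simple_digraph E ->
  clique_missing_one_edge E sigma i j ->
  legal eps delta ->
  PF_eigenvalue (1%:M - W_sub E eps delta sigma)
    (eps + (1 - eps) / 2 *
       (#|sigma|%:R + Num.sqrt (#|sigma|%:R ^+ 2 + 4 * (delta + eps) / (1 - eps)))).
Proof.
move=> _ [Hi Hj Hij Hcl] [d0 [e0 ed]].
have HA := @entries R T E sigma i j eps delta Hi Hj Hij Hcl.
set ii := enum_rank_in Hi i in HA.
set jj := enum_rank_in Hj j in HA.
set A := 1%:M - W_sub E eps delta sigma in HA *.
have iijj : (ii == jj) = false.
  apply/negbTE/negP => /eqP e; move: Hij.
  by rewrite -(enum_rankK_in Hi Hi) -(enum_rankK_in Hj Hj) -/ii -/jj e eqxx.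
have th0 : 0 < 1 - eps.
  have : delta / (delta + 1) < 1 by rewrite ltr_pdivrMr ?mul1r; lra.
  lra.
set th := 1 - eps in th0 HA *.
set c := delta + eps in HA *.
have c0 : 0 < c by rewrite /c; lra.
set N := #|sigma|%:R.
have N0 : 0 <= N by rewrite /N ler0n.
set D := Num.sqrt _.
have D0 : 0 < D.
  rewrite sqrtr_gt0; apply: ltr_wpDl; first exact: sqr_ge0.
  by apply: divr_gt0 => //; apply: mulr_gt0.
have D2 : D ^+ 2 = N ^+ 2 + 4 * c / th.
  by rewrite sqr_sqrtr // ltW // ltr_wpDl ?sqr_ge0 // divr_gt0 ?mulr_gt0.
have [q1 [q2 q3]] := @key_quad R th N c D (lt0r_neq0 th0) D2.
rewrite -/th.
set mp := th / 2 * (N + D) in q1 q2 q3 *.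
set mm := th / 2 * (N - D) in q2 q3.
have mp0 : 0 < mp by rewrite /mp mulr_gt0 ?divr_gt0 //; lra.
have mmle : mm <= mp by rewrite /mm /mp ler_wpM2l ?divr_ge0 ?ltW //; lra.
have thN : 0 <= th * N by rewrite mulr_ge0 // ltW.
have mmge : - (2 * eps + mm) <= 2 * eps + mp by lra.
split.
  rewrite -eigenvalue_root_char; apply/eigenvalueP.
  exists (\row_b (mp + c * (b == jj)%:R)).
    apply/rowP => b; rewrite (@rowA _ _ _ _ _ _ _ _ HA) !mxE.
    under eq_bigr do rewrite mxE.
    rewrite big_split /= sumr_const card_ord -mulr_natl.
    rewrite (bigD1 jj) //= big1 => [|a /negbTE ->]; last by rewrite mulr0.
    rewrite eqxx iijj /= mulr0 addr0 mulr1 addr0.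
    case: (b == jj) => /=; rewrite ?mulr1 ?mulr0 ?addr0 -/N.
      nra.
    nra.
  apply/eqP => /rowP /(_ ii); rewrite !mxE iijj mulr0 addr0 => /eqP.
  by rewrite gt_eqF.
have EN : N = #|sigma|%:R by [].
clearbody mp mm D N c th.
move=> z; rewrite map_char_poly -eigenvalue_root_char => /eigenvalueP [v Hv vnz].
have HAC : forall a b, (map_mx (real_complex R) A) a b = (real_complex R) eps * (a == b)%:R + (real_complex R) th + (real_complex R) c * ((a == ii) && (b == jj))%:R.
  have L : forall (x y u : R) (k m : nat), real_complex R (x * k%:R + y + u * m%:R)
     = real_complex R x * k%:R + real_complex R y + real_complex R u * m%:R.
    by move=> x y u k m; rewrite !rmorphD !rmorphM !rmorph_nat.
  by move=> a b; rewrite mxE HA L.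
have [s Es] : exists s, s = \sum_a v 0 a by eexists.
have Hb : forall b, z * v 0 b = (real_complex R) eps * v 0 b + (real_complex R) th * s + (real_complex R) c * v 0 ii * (b == jj)%:R.
  by move=> b; rewrite Es -(@rowA _ _ _ _ _ _ _ _ HAC) Hv mxE.
case: (eqVneq z ((real_complex R) eps)) => [-> | zne].
  rewrite normC_real lecR gtr0_norm //; lra.
set w := z - (real_complex R) eps.
have w0 : w != 0 by rewrite subr_eq0.
have ez : z = (real_complex R) eps + w by rewrite /w addrC subrK.
clearbody w.
have Hw : forall b, w * v 0 b = (real_complex R) th * s + (real_complex R) c * v 0 ii * (b == jj)%:R.
  move=> b; apply/(addrI ((real_complex R) eps * v 0 b)); rewrite -mulrDl -ez Hb; ring.
have Hii : w * v 0 ii = (real_complex R) th * s by rewrite Hw iijj mulr0 addr0.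
have Hs : w * s = (real_complex R) th * #|sigma|%:R * s + (real_complex R) c * v 0 ii.
  rewrite Es mulr_sumr; under eq_bigr do rewrite Hw.
  rewrite big_split /= sumr_const card_ord -mulr_natl.
  rewrite (bigD1 jj) //= big1 => [|a /negbTE ->]; last by rewrite mulr0.
  by rewrite eqxx /= !mulr1 -Es -mulr_natr addr0 mul1r mulrAC mulr_natr.
have s0 : s != 0.
  apply/eqP => s0; move/eqP: vnz; apply; apply/rowP => b; rewrite mxE.
  have vi0 : v 0 ii = 0.
    by move: Hii; rewrite s0 mulr0 => /eqP; rewrite mulf_eq0 (negbTE w0) => /eqP.
  by move: (Hw b); rewrite s0 vi0 !mulr0 mul0r addr0 => /eqP; rewrite mulf_eq0 (negbTE w0) => /eqP.
have quad : (w - (real_complex R) mp) * (w - (real_complex R) mm) = 0.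
  have e1 : (w - (real_complex R) mp) * (w - (real_complex R) mm) = w ^+ 2 - (real_complex R) (mp + mm) * w + (real_complex R) (mp * mm).
    by rewrite rmorphD rmorphM; ring.
  rewrite e1 q2 q3 rmorphN !rmorphM EN rmorph_nat.
  apply/eqP; rewrite -(mulIr_eq0 _ (mulIf s0)).
  apply/eqP.
  have -> : (w ^+ 2 - (real_complex R) th * #|sigma|%:R * w + - ((real_complex R) th * (real_complex R) c)) * s
     = w * (w * s) - (real_complex R) th * #|sigma|%:R * (w * s) - (real_complex R) c * ((real_complex R) th * s) by ring.
  by rewrite {1}Hs -Hii; ring.
move/eqP: quad; rewrite mulf_eq0 !subr_eq0 => /orP[] /eqP wE; rewrite ez wE -rmorphD normC_real lecR.
  by rewrite ger0_norm; lra.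
by rewrite ler_norml; apply/andP; split; lra.
Qed.
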